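(* Let $\mathcal D_n$ be a minimal DFA with state set $Q_n$ and transition semigroup $T_n$. For $t\in T_n$ and $p,q\in Q_n$: $p\prec q$ implies $pt\preceq qt$; and if $p\prec pt$, then $p\prec pt\prec\cdots\prec pt^k=pt^{k+1}$ for some $k\ge1$. Similarly, $p\succ q$ implies $pt\succeq qt$, and $p\succ pt$ implies $p\succ pt\succ\cdots\succ pt^k=pt^{k+1}$ for some $k\ge 1$.
   Context: The transition semigroup is the set of transformations $q\mapsto\delta(q,w)$ of $Q_n$ induced by nonempty words $w$; $qt$ denotes the image of $q$ under $t$, and $t^k$ is the $k$-fold composition. For a state $q$, $K_q$ is the language accepted by the DFA started in $q$. We write $p\prec q$ if $K_p\subsetneq K_q$, and $p\preceq q$ if $K_p\subseteq K_q$ (equivalently $p=q$ or $p\prec q$ in a minimal DFA); $\succ,\succeq$ are the reverse relations. *)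

(* Defs.v *)
From mathcomp Require Import all_boot.
Set Implicit Arguments. Unset Strict Implicit. Unset Printing Implicit Defensive.

Record dfa (n : nat) (A : finType) := DFA {
  delta : 'I_n -> A -> 'I_n;
  init  : 'I_n;
  final : pred 'I_n
}.

Section DFA.
Variables (n : nat) (A : finType) (D : dfa n A).

Definition delta_star (q : 'I_n) (w : seq A) : 'I_n := foldl (delta D) q w.

Definition accepts (q : 'I_n) (w : seq A) : bool := final D (delta_star q w).

Definition lang_sub (p q : 'I_n) : Prop := forall w, accepts p w -> accepts q w.

Definition st_le (p q : 'I_n) : Prop := lang_sub p q.
Definition st_lt (p q : 'I_n) : Prop := lang_sub p q /\ ~ lang_sub q p.

Definition minimal_dfa : Prop :=
  (forall q : 'I_n, exists w, delta_star (init D) w = q) /\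
  (forall p q : 'I_n, (forall w, accepts p w = accepts q w) -> p = q).

Definition in_trans_semigroup (t : 'I_n -> 'I_n) : Prop :=
  exists w : seq A, 0 < size w /\ forall q, t q = delta_star q w.
End DFA.

(* p t^i written as iter i t p *)

(* Main.v *)
Require Import Defs.
From Stdlib Require Import Classical.
From mathcomp Require Import all_boot.

Lemma min_ex (P : nat -> Prop) N : P N -> exists m, P m /\ forall i, i < m -> ~ P i.
Proof.
elim: N {-2}N (leqnn N) => [|N IH] M HM PM.
  by move: HM PM; rewrite leqn0 => /eqP -> PM; exists 0.
case: (classic (exists i, i < M /\ P i)) => [[i [Hi Pi]]|Hn].
  apply: (IH i) => //; by rewrite -ltnS (leq_trans Hi HM).
exists M; split => // i Hi Pi; apply: Hn; by exists i.
Qed.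

Lemma chain n (le : 'I_n -> 'I_n -> Prop)
  (refl : forall a, le a a)
  (trans : forall a b c, le a b -> le b c -> le a c)
  (anti : forall a b, le a b -> le b a -> a = b)
  (t : 'I_n -> 'I_n) (mono : forall a b, le a b -> le (t a) (t b)) p :
  le p (t p) /\ ~ le (t p) p ->
  exists k, 1 <= k /\ (forall i, i < k -> le (iter i t p) (iter i.+1 t p) /\
                                     ~ le (iter i.+1 t p) (iter i t p))
            /\ iter k t p = iter k.+1 t p.
Proof.
move=> [H0 N0].
have Hs : forall i, le (iter i t p) (iter i.+1 t p).
  elim=> [|i IH] //=. exact: mono.
have Hm : forall i d, le (iter i t p) (iter (i + d) t p).
  move=> i; elim=> [|d IH]; first by rewrite addn0.
  rewrite addnS; exact: trans IH (Hs _).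
pose f (i : 'I_n.+1) := iter i t p.
have Ninj : ~ injective f.
  move=> /leq_card; rewrite !card_ord; by rewrite ltnn.
have [x Hx] := not_all_ex_not _ _ Ninj.
have [y Hy] := not_all_ex_not _ _ Hx.
have [Exy Nxy] := imply_to_and _ _ Hy.
have Hex : exists i j, i < j /\ iter i t p = iter j t p.
  case: (ltngtP x y) => H.
  - by exists x, y.
  - by exists y, x.
  - by case: Nxy; apply: val_inj.
have [i [j [Hij Eij]]] := Hex.
have Pj : le (iter j.-1.+1 t p) (iter j.-1 t p).
  have Hj : j.-1.+1 = j by rewrite prednK // (leq_ltn_trans _ Hij).
  rewrite Hj -Eij.
  have -> : j.-1 = i + (j.-1 - i) by rewrite subnKC // -ltnS Hj.
  exact: Hm.
have [m [Pm Hmin]] := @min_ex (fun m => le (iter m.+1 t p) (iter m t p)) _ Pj.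
exists m; split; [|split].
- by case: m Pm {Hmin} => // /=.
- move=> k Hk; split; [exact: Hs|exact: Hmin].
- apply: anti => //.
Qed.

Lemma sub_t n (A : finType) (D : dfa n A) t p q :
  in_trans_semigroup D t -> lang_sub D p q -> lang_sub D (t p) (t q).
Proof.
move=> [u [_ Hu]] H w; rewrite /accepts !Hu /delta_star -!foldl_cat; exact: H.
Qed.

Theorem proposition3 (n : nat) (A : finType) (D : dfa n A) :
  minimal_dfa D ->
  forall (t : 'I_n -> 'I_n), in_trans_semigroup D t ->
  forall p q : 'I_n,
    (st_lt D p q -> st_le D (t p) (t q)) /\
    (st_lt D p (t p) ->
       exists k : nat, 1 <= k /\
         (forall i, i < k -> st_lt D (iter i t p) (iter i.+1 t p)) /\
         iter k t p = iter k.+1 t p) /\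
    (st_lt D q p -> st_le D (t q) (t p)) /\
    (st_lt D (t p) p ->
       exists k : nat, 1 <= k /\
         (forall i, i < k -> st_lt D (iter i.+1 t p) (iter i t p)) /\
         iter k t p = iter k.+1 t p).
Proof.
move=> [_ Hmin] t Ht p q.
have anti : forall a b, lang_sub D a b -> lang_sub D b a -> a = b.
  move=> a b H1 H2; apply: Hmin => w; apply/idP/idP; [exact: H1|exact: H2].
have refl : forall a, lang_sub D a a by move=> a w.
have trans : forall a b c, lang_sub D a b -> lang_sub D b c -> lang_sub D a c.
  by move=> a b c H1 H2 w /H1 /H2.
split; [|split; [|split]].
- move=> [H _]; exact: sub_t.
- move=> H.
  have := @chain n (lang_sub D) refl trans anti t (fun a b => @sub_t _ _ D t a b Ht) p H.
  move=> [k [Hk [Hi Ek]]]; exists k; split => //; split => // i Hi'; exact: Hi.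
- move=> [H _]; exact: sub_t.
- move=> H.
  have := @chain n (fun a b => lang_sub D b a) refl
     (fun a b c H1 H2 => trans _ _ _ H2 H1) (fun a b H1 H2 => anti _ _ H2 H1)
     t (fun a b => @sub_t _ _ D t b a Ht) p H.
  move=> [k [Hk [Hi Ek]]]; exists k; split => //; split => // i Hi'; exact: Hi.
Qed.
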